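(* Let $\mathcal P$ be an equal-area CPOS $2n$-gon which is not symmetric with respect to any point. Then for every $i$, $D(i-\tfrac12)\ne D(i+\tfrac12)$ and $M_i$ is the midpoint of the segment $D(i-\tfrac12)D(i+\tfrac12)$. Moreover every vertex of the area evolute and every vertex of the central symmetry set is a cusp; in particular both have exactly $n$ cusps.
   Context: A CPOS $2n$-gon ($n\ge2$) is a closed planar polygon $\mathcal P$ with vertices $P_1,\dots,P_{2n}$ (indices mod $2n$) bounding a convex region, with no two adjacent sides parallel, with $P_{i+n+1}-P_{i+n}$ parallel to $P_{i+1}-P_i$ for all $i$, and positively oriented: $[P_{i+1}-P_i,P_{j+1}-P_j]>0$ for $1\le i<j\le n$ ($[\cdot,\cdot]$ = determinant). It is equal-area if $[P_{i+1}-P_i,P_i-P_{i-1}]$ is independent of $i$, and symmetric w.r.t. $O$ if $P_{i+n}-O=O-P_i$ for all $i$. $d_i$ is the line through $P_i,P_{i+n}$; $D(i+\tfrac12)=d_i\cap d_{i+1}$; the central symmetry set is the closed polygon with vertices $D(1+\tfrac12),\dots,D(n+\tfrac12)$; $M_i=\tfrac12(P_i+P_{i+n})$ and the area evolute is the closed polygon with vertices $M_1,\dots,M_n$. Define $\lambda(i+\tfrac12)$, $1\le i\le 2n$, by $D(i+\tfrac12)=P_i+\lambda(i+\tfrac12)(P_{i+n}-P_i)$ (with $D(i+n+\frac12)=D(i+\frac12)$). A vertex $D(i_0+\tfrac12)$ is a cusp if $\lambda(i_0+\tfrac12)$ is a local extremum of the cyclic sequence $(\lambda(i+\tfrac12))_{i\bmod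 2n}$; a vertex $M_{i_0}$ is a cusp if $(\lambda(i_0-\tfrac12)-\tfrac12)(\lambda(i_0+\tfrac12)-\tfrac12)<0$. *)

(* Defs.v *)
(* Points of the plane are row vectors 'rV[R]_2 over an
   ordered (real) field R. Polygon vertices are indexed by int (indices
   taken mod 2n via a periodicity hypothesis). *)
From HB Require Import structures.
From mathcomp Require Import all_boot all_order all_algebra.
Set Implicit Arguments.
Unset Strict Implicit.
Unset Printing Implicit Defensive.
Import Order.TTheory GRing.Theory Num.Theory.
Local Open Scope ring_scope.

Section Defs.
Variable R : realFieldType.
Notation pt := 'rV[R]_2.

Definition det2 (u v : pt) : R := u 0 0 * v 0 1 - u 0 1 * v 0 0.

Definition side (P : int -> pt) (i : int) : pt := P (i + 1) - P i.

Definition CPOS (n : nat) (P : int -> pt) : Prop :=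
  (2 <= n)%N /\
      (forall i : int, P (i + (2 * n)%:Z) = P i) /\
      (* bounds a convex region: every vertex lies (weakly) to the left of
         every directed side line *)
      (forall i j : int, 0 <= det2 (side P i) (P j - P i)) /\
      (forall i : int, det2 (side P (i + 1)) (side P i) != 0) /\
      (forall i : int, det2 (side P (i + n%:Z)) (side P i) = 0) /\
      (* positively oriented *)
      (forall i j : int, 1 <= i -> i < j -> j <= n%:Z ->
        0 < det2 (side P i) (side P j)).

Definition equal_area (P : int -> pt) : Prop :=
  forall i j : int, det2 (side P i) (P i - P (i - 1)) =
                    det2 (side P j) (P j - P (j - 1)).

Definition symmetric_wrt (n : nat) (P : int -> pt) (O : pt) : Prop :=
  forall i : int, P (i + n%:Z) - O = O - P i.

Definition on_line (A B X : pt) : Prop := det2 (B - A) (X - A) = 0.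

(* D i stands for D(i + 1/2) = d_i \cap d_{i+1}, where d_i is the line
   through P_i and P_{i+n}. *)
Definition is_D (n : nat) (P : int -> pt) (D : int -> pt) : Prop :=
  forall i : int, on_line (P i) (P (i + n%:Z)) (D i) /\
                  on_line (P (i + 1)) (P (i + 1 + n%:Z)) (D i).

(* lam i stands for lambda(i + 1/2) *)
Definition is_lambda (n : nat) (P : int -> pt) (D : int -> pt)
  (lam : int -> R) : Prop :=
  forall i : int, D i = P i + lam i *: (P (i + n%:Z) - P i).

Definition M (n : nat) (P : int -> pt) (i : int) : pt :=
  2^-1 *: (P i + P (i + n%:Z)).

(* M_{i0} is a cusp of the area evolute *)
Definition area_evolute_cusp (lam : int -> R) (i0 : int) : bool :=
  (lam (i0 - 1) - 2^-1) * (lam i0 - 2^-1) < 0.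

(* D(i0 + 1/2) is a cusp of the central symmetry set: lambda(i0+1/2) is a
   (strict) local extremum of the cyclic sequence of lambdas *)
Definition css_cusp (lam : int -> R) (i0 : int) : bool :=
  (lam (i0 - 1) < lam i0) && (lam (i0 + 1) < lam i0) ||
  (lam i0 < lam (i0 - 1)) && (lam i0 < lam (i0 + 1)).

End Defs.

(* Main.v *)
Require Import Defs.
From HB Require Import structures.
From mathcomp Require Import all_boot all_order all_algebra.
From mathcomp Require Import ring lra zify.
Import Order.TTheory GRing.Theory Num.Theory.
Local Open Scope ring_scope.

Set Implicit Arguments.
Section Aux.
Variable R : realFieldType.
Notation pt := 'rV[R]_2.

Definition dotp2 (u v : pt) : R := u 0 0 * v 0 0 + u 0 1 * v 0 1.

Lemma det2Z_l a (u v : pt) : det2 (a *: u) v = a * det2 u v.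
Proof. rewrite /det2 !mxE; ring. Qed.
Lemma det2Z_r a (u v : pt) : det2 u (a *: v) = a * det2 u v.
Proof. rewrite /det2 !mxE; ring. Qed.
Lemma det2C (u v : pt) : det2 u v = - det2 v u.
Proof. rewrite /det2; ring. Qed.
Lemma det20l (v : pt) : det2 0 v = 0.
Proof. rewrite /det2 !mxE; ring. Qed.
Lemma det20r (v : pt) : det2 v 0 = 0.
Proof. rewrite /det2 !mxE; ring. Qed.

Lemma par_eq (a b : pt) : det2 b a = 0 -> a != 0 -> b = (dotp2 b a / dotp2 a a) *: a.
Proof.
move=> h anz.
have dnz : dotp2 a a != 0.
  apply/eqP => h0; move/eqP: anz; apply; apply/rowP => j.
  rewrite /dotp2 in h0; rewrite mxE.
  have e0 : a 0 0 = 0 by nra.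
  have e1 : a 0 1 = 0 by nra.
  case: j => [[|[|//]] Hj]; rewrite ?e0 ?e1; first by rewrite (_ : Ordinal Hj = 0) // ; apply/val_inj.
  by rewrite (_ : Ordinal Hj = 1) //; apply/val_inj.
apply/rowP => j; rewrite mxE.
move: h dnz; rewrite /det2 /dotp2 => h dnz.
case: j => [[|[|//]] Hj].
  rewrite (_ : Ordinal Hj = 0); last by apply/val_inj.
  apply/eqP; rewrite -subr_eq0.
  have -> : b 0 0 - (b 0 0 * a 0 0 + b 0 1 * a 0 1) / (a 0 0 * a 0 0 + a 0 1 * a 0 1) * a 0 0
     = a 0 1 * (b 0 0 * a 0 1 - b 0 1 * a 0 0) / (a 0 0 * a 0 0 + a 0 1 * a 0 1) by field.
  by rewrite h mulr0 mul0r.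
rewrite (_ : Ordinal Hj = 1); last by apply/val_inj.
apply/eqP; rewrite -subr_eq0.
have -> : b 0 1 - (b 0 0 * a 0 0 + b 0 1 * a 0 1) / (a 0 0 * a 0 0 + a 0 1 * a 0 1) * a 0 1
   = - a 0 0 * (b 0 0 * a 0 1 - b 0 1 * a 0 0) / (a 0 0 * a 0 0 + a 0 1 * a 0 1) by field.
by rewrite h mulr0 mul0r.
Qed.

Lemma detE (t : R) (a b c d : pt) :
  det2 (t *: a) (b + a + c - d) = t * (det2 a c - det2 a (d - b)).
Proof. rewrite /det2 !mxE; ring. Qed.

Lemma detF (t l : R) (Q A S : pt) :
  det2 (Q + t *: S - (A + S)) (A + l *: (Q - A) - (A + S)) =
  det2 S (Q - A) * (1 + (t - 1) * l).
Proof. rewrite /det2 !mxE; ring. Qed.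

Lemma vecG (t : R) (Q A S : pt) : 1 - t != 0 ->
  A + (1 - t)^-1 *: (Q - A) = (A + S) + (1 - t)^-1 *: ((Q + t *: S) - (A + S)).
Proof. move=> h; apply/rowP => j; rewrite !mxE; field; done. Qed.

Lemma vecL (a b c : pt) : a + (-1) *: c + (b + c) = a + b.
Proof. apply/rowP => j; rewrite !mxE; ring. Qed.

Lemma vecS (a b c : pt) : a + b = c -> a - 2^-1 *: c = 2^-1 *: c - b.
Proof. move<-; apply/rowP => j; rewrite !mxE; lra. Qed.

Lemma vecM (l : R) (A Q : pt) :
  2^-1 *: (A + Q) = 2^-1 *: (A + (1 - l) *: (Q - A) + (A + l *: (Q - A))).
Proof. apply/rowP => j; rewrite !mxE; ring. Qed.

End Aux.

Lemma e1 (k : nat) : k.+1%:Z = k%:Z + 1.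
Proof. by rewrite -addn1 PoszD. Qed.
Lemma int_prop (f : int -> Prop) : (forall i, f i -> f (i+1)) ->
  (forall i, f (i+1) -> f i) -> forall i j, f i -> f j.
Proof.
move=> up dn.
have H : forall k : nat, forall i, f i -> f (i + k%:Z) /\ f (i - k%:Z).
  elim=> [|k IH] i fi.
    by rewrite -[0%:Z]/(0:int) oppr0 !addr0.
  have [h1 h2] := IH i fi.
  split.
    rewrite e1 addrA; exact: up.
  apply: dn. by rewrite e1 opprD addrA addrNK.
move=> i j fi.
have -> : j = i + (j - i) by rewrite addrC subrK.
case: (j - i) => k; first by case: (H k i fi).
rewrite NegzE; by case: (H k.+1 i fi).
Qed.

Theorem mainTheorem5 (R : realFieldType) (n : nat) (P : int -> 'rV[R]_2)
  (D : int -> 'rV[R]_2) (lam : int -> R) :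
  CPOS n P -> equal_area P ->
  ~ (exists O : 'rV[R]_2, symmetric_wrt n P O) ->
  is_D n P D -> is_lambda n P D lam ->
  [/\ forall i : int, D (i - 1) != D i,
      forall i : int, M n P i = 2^-1 *: (D (i - 1) + D i),
      forall i : int, 1 <= i -> i <= n%:Z -> area_evolute_cusp lam i,
      forall i : int, 1 <= i -> i <= n%:Z -> css_cusp lam i &
      (#|[set i : 'I_n | area_evolute_cusp lam (i%:Z + 1)]| = n /\
      #|[set i : 'I_n | css_cusp lam (i%:Z + 1)]| = n)].
Proof.
move=> [hn [per [conv [adj [opp orient]]]]] EA nsym isD isL.
have side_eq : forall i, P (i + 1) = P i + side P i.
  by move=> i; rewrite /side [P i + _]addrC subrK.
have K0 : 0 < det2 (side P 1) (side P 2) by apply: orient; lia.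
set K := det2 (side P 1) (side P 2) in K0.
have Knz : K != 0 by rewrite gt_eqF.
have EA' : forall i, det2 (side P i) (side P (i+1)) = K.
  move=> i; have := EA (i+1) 2.
  rewrite addrK (_ : P 2 - P (2 - 1) = side P 1); last by rewrite /side.
  move=> h; rewrite /K det2C [det2 (side P 1) _]det2C; congr (- _); exact: h.
have snz : forall i, side P i != 0.
  move=> i; apply/negP => /eqP h; have := EA' i; rewrite h det20l => h0.
  by move: Knz; rewrite -h0 eqxx.
have [t ht] : exists t : int -> R, forall i, side P (i + n%:Z) = t i *: side P i.
  exists (fun i => @dotp2 R (side P (i + n%:Z)) (side P i) / @dotp2 R (side P i) (side P i)).
  by move=> i; apply: par_eq; [exact: opp | exact: snz].
have tt1 : forall i, t i * t (i+1) = 1.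
  move=> i; have := EA' (i + n%:Z).
  rewrite (_ : i + n%:Z + 1 = i + 1 + n%:Z); last by rewrite addrAC.
  rewrite !ht det2Z_l det2Z_r EA' mulrA => h.
  by apply: (mulIf Knz); rewrite mul1r.
have t1neg : t 1 < 0.
  have d : 0 < det2 (side P 1) (side P n%:Z) by apply: orient; lia.
  have := EA' n%:Z; rewrite (addrC n%:Z 1) ht det2Z_r det2C => h.
  nra.
have tneg : forall i, t i < 0.
  move=> i; apply: (@int_prop (fun i => t i < 0) _ _ 1 i t1neg).
    by move=> j hj; have := tt1 j; nra.
  by move=> j hj; have := tt1 j; nra.
have tm1 : forall i, t i != -1.
  move=> i; apply/eqP => ti.
  have all1 : forall j, t j = -1.
    move=> j; apply: (@int_prop (fun j => t j = -1) _ _ i j ti).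
      by move=> k hk; have := tt1 k; rewrite hk; lra.
    by move=> k hk; have := tt1 k; rewrite hk; lra.
  apply: nsym.
  exists (2^-1 *: (P n%:Z + P 0)).
  have C : forall j, P (j + n%:Z) + P j = P n%:Z + P 0.
    move=> j; apply: (@int_prop (fun j => P (j + n%:Z) + P j = P n%:Z + P 0) _ _ 0 j);
      last by rewrite add0r.
      move=> k hk; rewrite (_ : k + 1 + n%:Z = k + n%:Z + 1); last by rewrite addrAC.
      by rewrite !side_eq ht all1 vecL.
    move=> k; rewrite (_ : k + 1 + n%:Z = k + n%:Z + 1); last by rewrite addrAC.
    by rewrite !side_eq ht all1 vecL.
  by move=> j; apply: vecS; exact: C.
have upos : forall i, K <= det2 (side P i) (P (i + n%:Z) - P i).
  move=> i; have := conv (i + n%:Z) (i + 2).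
  rewrite (_ : i + 2 = i + 1 + 1); last by lia.
  rewrite side_eq side_eq ht detE EA' => h.
  have := tneg i; nra.
have tnz1 : forall i, 1 - t i != 0.
  by move=> i; have := tneg i => h; apply/eqP => h1; lra.
have lamE : forall i, lam i = (1 - t i)^-1.
  move=> i; have [_ h] := isD i; move: h; rewrite /on_line isL.
  rewrite (_ : i + 1 + n%:Z = i + n%:Z + 1); last by rewrite addrAC.
  rewrite !side_eq ht detF => /eqP; rewrite mulf_eq0 => /orP [h|h].
    by have := upos i; rewrite (eqP h) => h'; move: K0; lra.
  apply: (mulIf (tnz1 i)); rewrite mulVf //.
  apply/eqP; rewrite -subr_eq0.
  rewrite (_ : lam i * (1 - t i) - 1 = - (1 + (t i - 1) * lam i)); last by ring.
  by rewrite (eqP h) oppr0.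
have Dm : forall i, D (i - 1) = P i + lam (i - 1) *: (P (i + n%:Z) - P i).
  move=> i; rewrite isL.
  have ei : i = (i - 1) + 1 by rewrite subrK.
  move: (i - 1) ei => j ->.
  rewrite (_ : j + 1 + n%:Z = j + n%:Z + 1); last by rewrite addrAC.
  by rewrite !side_eq ht lamE; apply: vecG.
have ls : forall i, lam (i - 1) + lam i = 1.
  move=> i; have := tt1 (i - 1); rewrite subrK => h.
  have tinz : t i != 0 by rewrite lt_eqF.
  have e : t (i - 1) = (t i)^-1.
    by apply: (mulIf tinz); rewrite mulVf.
  have := tnz1 (i - 1); rewrite !lamE e => h2.
  have h3 := tnz1 i.
  field; rewrite h3 tinz /=; apply/eqP => h4; have := tneg i; lra.
have lhalf : forall i, lam i != 2^-1.
  move=> i; rewrite lamE; apply/eqP => h.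
  have : 1 - t i = 2 by rewrite -[1 - t i]invrK h invrK.
  by move=> h2; move/eqP: (tm1 i); apply; lra.
have C1 : forall i, area_evolute_cusp lam i.
  move=> i; rewrite /area_evolute_cusp.
  rewrite (_ : lam (i - 1) = 1 - lam i); last by have := ls i; lra.
  by case/orP: (lt_total (lhalf i)) => h; nra.
have C2 : forall i, css_cusp lam i.
  move=> i; rewrite /css_cusp.
  rewrite (_ : lam (i - 1) = 1 - lam i); last by have := ls i; lra.
  rewrite (_ : lam (i + 1) = 1 - lam i); last by have := ls (i + 1); rewrite addrK; lra.
  case/orP: (lt_total (lhalf i)) => h.
    by apply/orP; right; apply/andP; split; lra.
  by apply/orP; left; apply/andP; split; lra.
split.
- move=> i; rewrite Dm isL; apply/eqP => /addrI /eqP.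
  rewrite -subr_eq0 -scalerBl scaler_eq0 => /orP [h|h].
    have := ls i; move: h; rewrite subr_eq0 => /eqP h h'.
    by move/eqP: (lhalf i); apply; lra.
  by have := upos i; rewrite (eqP h) det20r => h'; move: K0; lra.
- move=> i; rewrite /M Dm isL.
  rewrite (_ : lam (i - 1) = 1 - lam i); last by have := ls i; lra.
  exact: vecM.
- by move=> i _ _; exact: C1.
- by move=> i _ _; exact: C2.
- split.
    rewrite (_ : [set i : 'I_n | area_evolute_cusp lam (i%:Z + 1)] = setT) ?cardsT ?card_ord //.
    by apply/setP => i; rewrite !inE C1.
  rewrite (_ : [set i : 'I_n | css_cusp lam (i%:Z + 1)] = setT) ?cardsT ?card_ord //.
  by apply/setP => i; rewrite !inE C2.
Qed.
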